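(* $\mathcal{S}$ is a separating class for $SG(\mathbb{R})$: for every $f\in SG(\mathbb{R})$ and every $\phi\in\mathcal{S}$ the function $f\phi$ is piecewise continuous and absolutely integrable on $\mathbb{R}$, and if $f,g\in SG(\mathbb{R})$ satisfy $\int_{-\infty}^\infty f(x)\phi(x)\,dx=\int_{-\infty}^\infty g(x)\phi(x)\,dx$ for all $\phi\in\mathcal{S}$, then $f(x)=g(x)$ for all $x\in\mathbb{R}$.
   Context: A function $f:\mathbb{R}\to\mathbb{C}$ is piecewise continuous if on each bounded subinterval it is continuous except at finitely many points, at which it has finite one-sided limits. $PC_{bj}$ is the set of piecewise continuous $f:\mathbb{R}\to\mathbb{C}$ satisfying $f(x)=\tfrac12\big(f(x+)+f(x-)\big)$ for every $x\in\mathbb{R}$. $SG(\mathbb{R})$ is the set of $f\in PC_{bj}$ for which there exist constants $C>0$ and $N\in\mathbb{N}$ with $\int_{-R}^{R}|f(x)|\,dx\le C(1+R)^N$ for all $R>0$. $\mathcal{S}$ (the Schwartz class) is the set of infinitely differentiable $\phi:\mathbb{R}\to\mathbb{C}$ with $\lim_{x\to\pm\infty}x^m\phi^{(n)}(x)=0$ for all integers $m,n\ge 0$. *)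

(* Defs.v *)
From Stdlib Require Import Reals List.
From Coquelicot Require Import Coquelicot.
Open Scope R_scope.

Definition one_sided_limits (f : R -> C) (x : R) (lp lm : C) : Prop :=
  filterlim f (at_right x) (locally lp) /\ filterlim f (at_left x) (locally lm).

Definition piecewise_continuous (f : R -> C) : Prop :=
  forall a b : R, exists l : list R,
    (forall x, a <= x <= b -> ~ In x l -> continuous f x) /\
    (forall x, In x l -> exists lp lm : C, one_sided_limits f x lp lm).

Definition PC_bj (f : R -> C) : Prop :=
  piecewise_continuous f /\
  forall x : R, exists lp lm : C,
    one_sided_limits f x lp lm /\ f x = ((lp + lm) / 2)%C.

Definition SG (f : R -> C) : Prop :=
  PC_bj f /\
  exists (K : R) (N : nat), 0 < K /\
    forall r : R, 0 < r -> RInt (fun x => Cmod (f x)) (- r) r <= K * (1 + r) ^ N.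

(* real-valued Schwartz conditions; a function R -> C is differentiable
   (n times) iff its real and imaginary parts are, with componentwise derivatives *)
Definition smooth_decay (u : R -> R) : Prop :=
  (forall (n : nat) (x : R), ex_derive (Derive_n u n) x) /\
  (forall m n : nat,
     is_lim (fun x => x ^ m * Derive_n u n x) p_infty 0 /\
     is_lim (fun x => x ^ m * Derive_n u n x) m_infty 0).

Definition Schwartz (phi : R -> C) : Prop :=
  smooth_decay (fun x => Re (phi x)) /\ smooth_decay (fun x => Im (phi x)).

Definition int_R (h : R -> C) : C :=
  @RInt_gen C_R_CompleteNormedModule h (Rbar_locally m_infty) (Rbar_locally p_infty).

Definition abs_integrable (h : R -> C) : Prop :=
  ex_RInt_gen (fun x => Cmod (h x)) (Rbar_locally m_infty) (Rbar_locally p_infty).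

(* Main.v *)
Require Import Defs.
From Stdlib Require Import Reals List Lra Lia Classical ZArith.
From Coquelicot Require Import Coquelicot.
Open Scope R_scope.

Lemma ball_R (a d y : R) : ball a d y -> Rabs (y - a) < d.
Proof. intro H; exact H. Qed.
Lemma R_ball (a d y : R) : Rabs (y - a) < d -> ball a d y.
Proof. intro H; exact H. Qed.

Section Glue.
Context {V : CompleteNormedModule R_AbsRing}.

Lemma glue_ex_RInt (k : R -> V) a b la lb : a < b ->
  (forall x, a < x < b -> continuous k x) ->
  filterlim k (at_right a) (locally la) ->
  filterlim k (at_left b) (locally lb) -> ex_RInt k a b.
Proof.
  intros Hab Hc Ha Hb.
  set (g := fun x => if Rle_dec x a then la else if Rle_dec b x then lb else k x).
  apply ex_RInt_ext with g.
  { intros x [H1 H2]. rewrite Rmin_left in H1 by lra. rewrite Rmax_right in H2 by lra.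
    unfold g. destruct (Rle_dec x a); [lra|]. destruct (Rle_dec b x); [lra|]. reflexivity. }
  apply ex_RInt_continuous. intros z [H1 H2].
  rewrite Rmin_left in H1 by lra. rewrite Rmax_right in H2 by lra.
  destruct (Req_dec z a) as [->|Hza].
  { unfold continuous. apply filterlim_locally. intros eps.
    apply filterlim_locally with (eps := eps) in Ha. destruct Ha as [d Hd].
    assert (Hd' : 0 < Rmin d (b - a)) by (apply Rmin_pos; [apply cond_pos|lra]).
    exists (mkposreal _ Hd'). intros y Hy. apply ball_R in Hy. simpl in Hy.
    unfold g at 1 2. destruct (Rle_dec a a); [|lra].
    destruct (Rle_dec y a). apply ball_center.
    destruct (Rle_dec b y). { assert (Rmin d (b-a) <= b - a) by apply Rmin_r. apply Rabs_lt_between in Hy. lra. }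
    apply Hd. apply R_ball. assert (Rmin d (b-a) <= d) by apply Rmin_l. lra. lra. }
  destruct (Req_dec z b) as [->|Hzb].
  { unfold continuous. apply filterlim_locally. intros eps.
    apply filterlim_locally with (eps := eps) in Hb. destruct Hb as [d Hd].
    assert (Hd' : 0 < Rmin d (b - a)) by (apply Rmin_pos; [apply cond_pos|lra]).
    exists (mkposreal _ Hd'). intros y Hy. apply ball_R in Hy. simpl in Hy.
    unfold g at 1 2. destruct (Rle_dec b a); [lra|]. destruct (Rle_dec b b); [|lra].
    destruct (Rle_dec y a). { assert (Rmin d (b-a) <= b - a) by apply Rmin_r. apply Rabs_lt_between in Hy. lra. }
    destruct (Rle_dec b y). apply ball_center.
    apply Hd. apply R_ball. assert (Rmin d (b-a) <= d) by apply Rmin_l. lra. lra. }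
  apply continuous_ext_loc with k.
  { assert (Hd' : 0 < Rmin (z - a) (b - z)) by (apply Rmin_pos; lra).
    exists (mkposreal _ Hd'). intros y Hy. apply ball_R in Hy. simpl in Hy.
    assert (Rmin (z-a) (b-z) <= z - a) by apply Rmin_l.
    assert (Rmin (z-a) (b-z) <= b - z) by apply Rmin_r.
    apply Rabs_lt_between in Hy.
    unfold g. destruct (Rle_dec y a); [lra|]. destruct (Rle_dec b y); [lra|]. reflexivity. }
  unfold g. destruct (Rle_dec z a); [lra|]. destruct (Rle_dec b z); [lra|].
  apply Hc. lra.
Qed.

Definition LIMS (k : R -> V) := forall x, exists lp lm,
  filterlim k (at_right x) (locally lp) /\ filterlim k (at_left x) (locally lm).

Lemma pc_ex_RInt_list (k : R -> V) : LIMS k -> forall l a b, a <= b ->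
  (forall x, a < x < b -> ~ In x l -> continuous k x) -> ex_RInt k a b.
Proof.
  intros HL l. induction l as [|p l IH]; intros a b Hab Hc.
  - destruct (Req_dec a b) as [->|Hne]. apply ex_RInt_point.
    destruct (HL a) as [la [_ [Ha _]]]. destruct (HL b) as [_ [lb [_ Hb]]].
    apply glue_ex_RInt with la lb; [lra| |exact Ha|exact Hb]. intros x Hx. apply Hc; auto.
  - destruct (Rlt_dec a p) as [Hap|Hap]; [destruct (Rlt_dec p b) as [Hpb|Hpb]|].
    + apply ex_RInt_Chasles with p.
      * apply IH. lra. intros x Hx Hn. apply Hc. lra. intros [He|He]; [lra|tauto].
      * apply IH. lra. intros x Hx Hn. apply Hc. lra. intros [He|He]; [lra|tauto].
    + apply IH; auto. intros x Hx Hn. apply Hc; auto. intros [He|He]; [lra|tauto].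
    + apply IH; auto. intros x Hx Hn. apply Hc; auto. intros [He|He]; [lra|tauto].
Qed.

Definition PCL (k : R -> V) := forall a b, exists l : list R,
  forall x, a <= x <= b -> ~ In x l -> continuous k x.

Lemma pc_ex_RInt (k : R -> V) : LIMS k -> PCL k -> forall a b, ex_RInt k a b.
Proof.
  intros HL HP.
  assert (H : forall a b, a <= b -> ex_RInt k a b).
  { intros a b Hab. destruct (HP a b) as [l Hl].
    apply pc_ex_RInt_list with l; auto. intros x Hx Hn. apply Hl; auto. lra. }
  intros a b. destruct (Rle_dec a b). auto. apply ex_RInt_swap. apply H. lra.
Qed.
End Glue.

Lemma lim_plus {T} {F : (T -> Prop) -> Prop} {FF : Filter F} (f g : T -> R) a b :
  filterlim f F (locally a) -> filterlim g F (locally b) ->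
  filterlim (fun x => f x + g x) F (locally (a + b)).
Proof. intros Hf Hg. exact (filterlim_comp_2 _ _ _ Hf Hg (@filterlim_plus R_AbsRing R_NormedModule a b)). Qed.

Lemma lim_mult {T} {F : (T -> Prop) -> Prop} {FF : Filter F} (f g : T -> R) a b :
  filterlim f F (locally a) -> filterlim g F (locally b) ->
  filterlim (fun x => f x * g x) F (locally (a * b)).
Proof. intros Hf Hg. exact (filterlim_comp_2 _ _ _ Hf Hg (@filterlim_mult R_AbsRing a b)). Qed.

Lemma lim_opp {T} {F : (T -> Prop) -> Prop} {FF : Filter F} (f : T -> R) a :
  filterlim f F (locally a) -> filterlim (fun x => - f x) F (locally (- a)).
Proof. intros Hf. eapply filterlim_comp; [exact Hf| exact (@filterlim_opp R_AbsRing R_NormedModule a)]. Qed.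

Lemma lim_minus {T} {F : (T -> Prop) -> Prop} {FF : Filter F} (f g : T -> R) a b :
  filterlim f F (locally a) -> filterlim g F (locally b) ->
  filterlim (fun x => f x - g x) F (locally (a - b)).
Proof. intros Hf Hg. apply lim_plus; auto. apply lim_opp; auto. Qed.

Lemma lim_comp_cont {T} {F : (T -> Prop) -> Prop} (f : T -> R) (g : R -> R) a :
  filterlim f F (locally a) -> continuous g a -> filterlim (fun x => g (f x)) F (locally (g a)).
Proof. intros Hf Hg. eapply filterlim_comp; [exact Hf| exact Hg]. Qed.

Lemma lim_ext {T} {F : (T -> Prop) -> Prop} {FF : Filter F} (f g : T -> R) a :
  (forall x, f x = g x) -> filterlim f F (locally a) -> filterlim g F (locally a).
Proof. intros He Hf. apply filterlim_ext with f; auto. Qed.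

Lemma Clim_iff {T} {F : (T -> Prop) -> Prop} {FF : Filter F} (k : T -> C) (l : C) :
  filterlim k F (locally l) <->
  (filterlim (fun x => fst (k x)) F (locally (fst l)) /\
   filterlim (fun x => snd (k x)) F (locally (snd l))).
Proof.
  rewrite !filterlim_locally. split.
  - intros H. split; intros eps; generalize (H eps); apply filter_imp; intros x [H1 H2]; assumption.
  - intros [H1 H2] eps. generalize (filter_and _ _ (H1 eps) (H2 eps)). apply filter_imp.
    intros x [A B]. split; assumption.
Qed.

Definition RG (k : R -> R) := @LIMS R_CompleteNormedModule k /\ @PCL R_CompleteNormedModule k.

Lemma RG_ext (f g : R -> R) : (forall x, f x = g x) -> RG f -> RG g.
Proof.
  intros He [HL HP]. split.
  - intros x. destruct (HL x) as [lp [lm [H1 H2]]]. exists lp, lm.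
    split; apply lim_ext with f; auto.
  - intros a b. destruct (HP a b) as [l Hl]. exists l. intros x Hx Hn.
    apply continuous_ext with f; auto.
Qed.

Lemma RG_cont (f : R -> R) : (forall x, continuous f x) -> RG f.
Proof.
  intros Hc. split.
  - intros x. exists (f x), (f x). split.
    + eapply filterlim_filter_le_1; [apply filter_le_within| apply Hc].
    + eapply filterlim_filter_le_1; [apply filter_le_within| apply Hc].
  - intros a b. exists nil. intros; auto.
Qed.

Lemma RG_op2 (op : R -> R -> R) (f g : R -> R) :
  (forall {T} {F : (T -> Prop) -> Prop} {FF : Filter F} (u v : T -> R) a b,
      filterlim u F (locally a) -> filterlim v F (locally b) ->
      filterlim (fun x => op (u x) (v x)) F (locally (op a b))) ->
  RG f -> RG g -> RG (fun x => op (f x) (g x)).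
Proof.
  intros Hop [HL1 HP1] [HL2 HP2]. split.
  - intros x. destruct (HL1 x) as [a1 [b1 [A1 B1]]]. destruct (HL2 x) as [a2 [b2 [A2 B2]]].
    exists (op a1 a2), (op b1 b2). split; apply Hop; auto; exact _.
  - intros a b. destruct (HP1 a b) as [l1 H1]. destruct (HP2 a b) as [l2 H2].
    exists (l1 ++ l2). intros x Hx Hn. rewrite in_app_iff in Hn.
    unfold continuous. apply Hop; [exact _|apply H1|apply H2]; auto.
Qed.

Lemma RG_plus f g : RG f -> RG g -> RG (fun x => f x + g x).
Proof. apply RG_op2. intros. apply lim_plus; auto. Qed.
Lemma RG_mult f g : RG f -> RG g -> RG (fun x => f x * g x).
Proof. apply RG_op2. intros. apply lim_mult; auto. Qed.
Lemma RG_minus f g : RG f -> RG g -> RG (fun x => f x - g x).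
Proof. apply RG_op2. intros. apply lim_minus; auto. Qed.

Lemma RG_comp (g : R -> R) (f : R -> R) : (forall y, continuous g y) -> RG f -> RG (fun x => g (f x)).
Proof.
  intros Hg [HL HP]. split.
  - intros x. destruct (HL x) as [a [b [A B]]]. exists (g a), (g b).
    split; apply lim_comp_cont; auto.
  - intros a b. destruct (HP a b) as [l Hl]. exists l. intros x Hx Hn.
    apply continuous_comp; auto.
Qed.

Lemma sqrt_continuous y : continuous sqrt y.
Proof.
  destruct (Rle_dec 0 y) as [H|H].
  - apply continuity_pt_filterlim. apply continuity_pt_sqrt; auto.
  - apply continuous_ext_loc with (fun _ => 0).
    + assert (Hp : 0 < - y) by lra. exists (mkposreal _ Hp). intros z Hz.
      apply ball_R in Hz. simpl in Hz. apply Rabs_lt_between in Hz.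
      rewrite sqrt_neg_0; auto. lra.
    + apply continuous_const.
Qed.

Definition RGC (k : R -> C) := RG (fun x => fst (k x)) /\ RG (fun x => snd (k x)).

Lemma RGC_LIMS k : RGC k -> @LIMS C_R_CompleteNormedModule k.
Proof.
  intros [[HL1 _] [HL2 _]] x. destruct (HL1 x) as [a1 [b1 [A1 B1]]].
  destruct (HL2 x) as [a2 [b2 [A2 B2]]]. exists (a1, a2), (b1, b2).
  split; apply Clim_iff; split; auto.
Qed.

Lemma RGC_cont_pts k : RGC k -> forall a b, exists l : list R,
  forall x, a <= x <= b -> ~ In x l -> continuous k x.
Proof.
  intros [[_ HP1] [_ HP2]] a b. destruct (HP1 a b) as [l1 H1]. destruct (HP2 a b) as [l2 H2].
  exists (l1 ++ l2). intros x Hx Hn. rewrite in_app_iff in Hn.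
  unfold continuous. apply Clim_iff. split; [apply H1|apply H2]; auto.
Qed.

Lemma RGC_PCL k : RGC k -> @PCL C_R_CompleteNormedModule k.
Proof. intros H a b. exact (RGC_cont_pts k H a b). Qed.

Lemma RGC_mult f g : RGC f -> RGC g -> RGC (fun x => (f x * g x)%C).
Proof.
  intros [A1 B1] [A2 B2]. split; simpl.
  - apply RG_minus; apply RG_mult; auto.
  - apply RG_plus; apply RG_mult; auto.
Qed.

Lemma RGC_minus f g : RGC f -> RGC g -> RGC (fun x => (f x - g x)%C).
Proof.
  intros [A1 B1] [A2 B2]. split; simpl; apply RG_minus; auto.
Qed.

Lemma RGC_Cmod k : RGC k -> RG (fun x => Cmod (k x)).
Proof.
  intros [A B]. unfold Cmod. apply RG_comp with (g := sqrt). apply sqrt_continuous.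
  apply RG_plus; simpl; apply RG_mult; auto; apply RG_mult; auto; apply RG_cont; intros; apply continuous_const.
Qed.

Lemma RGC_cont k : (forall x, continuous (fun y => fst (k y)) x) -> (forall x, continuous (fun y => snd (k y)) x) -> RGC k.
Proof. intros; split; apply RG_cont; auto. Qed.

Lemma PC_bj_RGC f : PC_bj f -> RGC f.
Proof.
  intros [HP HL]. split; split.
  - intros x. destruct (HL x) as [lp [lm [[H1 H2] _]]]. exists (fst lp), (fst lm).
    apply Clim_iff in H1. apply Clim_iff in H2. tauto.
  - intros a b. destruct (HP a b) as [l [Hl _]]. exists l. intros x Hx Hn.
    specialize (Hl x Hx Hn). unfold continuous in Hl. apply Clim_iff in Hl. apply Hl.
  - intros x. destruct (HL x) as [lp [lm [[H1 H2] _]]]. exists (snd lp), (snd lm).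
    apply Clim_iff in H1. apply Clim_iff in H2. tauto.
  - intros a b. destruct (HP a b) as [l [Hl _]]. exists l. intros x Hx Hn.
    specialize (Hl x Hx Hn). unfold continuous in Hl. apply Clim_iff in Hl. apply Hl.
Qed.

Lemma RInt_sub_le (g : R -> R) a c d b :
  (forall x, 0 <= g x) -> (forall u v, ex_RInt g u v) ->
  a <= c -> c <= d -> d <= b -> RInt g c d <= RInt g a b.
Proof.
  intros Hg Hi H1 H2 H3.
  assert (E1 := RInt_Chasles g a c b (Hi _ _) (Hi _ _)).
  assert (E2 := RInt_Chasles g c d b (Hi _ _) (Hi _ _)).
  assert (0 <= RInt g a c) by (apply RInt_ge_0; auto).
  assert (0 <= RInt g d b) by (apply RInt_ge_0; auto).
  unfold plus in E1, E2; simpl in E1, E2. lra.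
Qed.

Lemma module_alg {V : NormedModule R_AbsRing} (p x q : V) :
  minus (plus p (plus x q)) x = plus p q.
Proof.
  unfold minus. rewrite (plus_comm x q), plus_assoc. rewrite <- plus_assoc. etransitivity; [apply f_equal; apply plus_opp_r|apply plus_zero_r].
Qed.

Lemma RInt_correct_R (f : R -> R) a b : ex_RInt f a b -> is_RInt f a b (RInt f a b).
Proof. apply (@RInt_correct R_CompleteNormedModule). Qed.

Lemma norm_alg {V : NormedModule R_AbsRing} (p x q : V) e :
  norm (plus p q) < e -> norm (minus (plus p (plus x q)) x) < e.
Proof. rewrite module_alg. auto. Qed.

Lemma conv_gen {V : CompleteNormedModule R_AbsRing} (k : R -> V) B :
  (forall a b, ex_RInt k a b) -> (forall a b, ex_RInt (fun x => norm (k x)) a b) ->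
  (forall r, 0 <= r -> RInt (fun x => norm (k x)) (-r) r <= B) ->
  ex_RInt_gen k (Rbar_locally m_infty) (Rbar_locally p_infty).
Proof.
  intros Hk Hn HB.
  set (nk := fun x => norm (k x)).
  assert (Hnk0 : forall x, 0 <= nk x) by (intros; apply norm_ge_0).
  set (E := fun y => exists r, 0 <= r /\ y = RInt nk (-r) r).
  destruct (completeness E) as [S [HS1 HS2]].
  { exists B. intros y [r [Hr ->]]. apply HB; auto. }
  { exists (RInt nk (-0) 0). exists 0. split; auto. lra. }
  assert (HGS : forall a b, a <= b -> RInt nk a b <= S).
  { intros a b Hab. set (R0 := Rmax (Rabs a) (Rabs b)).
    assert (Ha : Rabs a <= R0) by apply Rmax_l. assert (Hb : Rabs b <= R0) by apply Rmax_r.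
    apply Rle_trans with (RInt nk (-R0) R0).
    - apply RInt_sub_le; auto.
      + apply Rabs_le_between in Ha; lra.
      + apply Rabs_le_between in Hb; lra.
    - apply HS1. exists R0. split; auto. apply Rle_trans with (Rabs a); auto. apply Rabs_pos. }
  assert (Hsup : forall eps : posreal, exists M, 0 <= M /\ S - eps < RInt nk (-M) M).
  { intros eps. apply NNPP. intros Hno.
    assert (S <= S - eps).
    { apply HS2. intros y [r [Hr ->]]. apply Rnot_lt_le. intros Hlt. apply Hno. exists r. auto. }
    destruct eps; simpl in *; lra. }
  set (Fl := filtermap (fun ab => RInt k (fst ab) (snd ab))
               (filter_prod (Rbar_locally m_infty) (Rbar_locally p_infty))).
  assert (HFl : ProperFilter Fl).
  { apply filtermap_proper_filter. apply filter_prod_proper; apply Rbar_locally_filter. }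
  assert (Hc : cauchy Fl).
  { intros eps. destruct (Hsup eps) as [M [HM HSM]].
    exists (RInt k (-M) M). unfold Fl, filtermap.
    exists (fun a => a < -M) (fun b => M < b).
    - exists (-M). auto.
    - exists M. auto.
    - intros a b Ha Hb. simpl. apply (@norm_compat1 R_AbsRing V).
      rewrite <- (RInt_Chasles k a (-M) b) by auto.
      rewrite <- (RInt_Chasles k (-M) M b) by auto.
      apply (@norm_alg (CompleteNormedModule.NormedModule R_AbsRing V)).
      eapply Rle_lt_trans. apply norm_triangle.
      assert (H1 : norm (RInt k a (-M)) <= RInt nk a (-M)).
      { apply (norm_RInt_le k nk a (-M) (RInt k a (-M)) (RInt nk a (-M))). lra. intros; apply Rle_refl.
        apply RInt_correct; auto. apply RInt_correct_R; auto. }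
      assert (H2 : norm (RInt k M b) <= RInt nk M b).
      { apply (norm_RInt_le k nk M b (RInt k M b) (RInt nk M b)). lra. intros; apply Rle_refl.
        apply RInt_correct; auto. apply RInt_correct_R; auto. }
      assert (H3 : RInt nk a b <= S) by (apply HGS; lra).
      rewrite <- (RInt_Chasles nk a (-M) b) in H3 by auto.
      rewrite <- (RInt_Chasles nk (-M) M b) in H3 by auto.
      unfold plus in H3; simpl in H3. unfold nk in *. lra. }
  exists (lim Fl).
  intros P [eps HP]. unfold filtermapi.
  generalize (complete_cauchy Fl HFl Hc eps). unfold Fl, filtermap.
  apply filter_imp. intros [a b] Hab. exists (RInt k a b). split.
  apply RInt_correct; auto. apply HP. exact Hab.
Qed.

Lemma Cmod_le_sum z : Cmod z <= Rabs (fst z) + Rabs (snd z).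
Proof.
  unfold Cmod. rewrite <- (sqrt_Rsqr (Rabs (fst z) + Rabs (snd z))).
  2: { generalize (Rabs_pos (fst z)) (Rabs_pos (snd z)); lra. }
  apply sqrt_le_1_alt. unfold Rsqr. rewrite <- (pow2_abs (fst z)), <- (pow2_abs (snd z)).
  generalize (Rabs_pos (fst z)) (Rabs_pos (snd z)). nra.
Qed.

Lemma exd_cont (u : R -> R) x : ex_derive u x -> continuous u x.
Proof. apply (@ex_derive_continuous R_AbsRing R_NormedModule). Qed.

Lemma smooth_cont u : smooth_decay u -> forall x, continuous u x.
Proof. intros [Hd _] x. apply exd_cont. exact (Hd 0%nat x). Qed.

Lemma schwartz_cont phi : Schwartz phi -> RGC phi.
Proof.
  intros [H1 H2]. apply RGC_cont; apply smooth_cont; auto.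
Qed.

Lemma schwartz_cont_C phi : Schwartz phi -> forall x, continuous phi x.
Proof.
  intros [H1 H2] x. unfold continuous. apply Clim_iff. split; apply smooth_cont; auto.
Qed.

Lemma decay_bound (u : R -> R) m :
  is_lim (fun x => x^m * u x) p_infty 0 -> is_lim (fun x => x^m * u x) m_infty 0 ->
  exists X, 1 <= X /\ forall x, X <= Rabs x -> Rabs (x^m * u x) <= 1.
Proof.
  intros Hp Hm. apply is_lim_spec in Hp. apply is_lim_spec in Hm.
  destruct (Hp (mkposreal 1 Rlt_0_1)) as [M1 HM1].
  destruct (Hm (mkposreal 1 Rlt_0_1)) as [M2 HM2].
  exists (Rmax 1 (Rmax (M1 + 1) (- M2 + 1))). split. apply Rmax_l.
  intros x Hx.
  assert (A1 := Rmax_l 1 (Rmax (M1 + 1) (- M2 + 1))).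
  assert (A2 := Rmax_r 1 (Rmax (M1 + 1) (- M2 + 1))).
  assert (A3 := Rmax_l (M1 + 1) (- M2 + 1)). assert (A4 := Rmax_r (M1 + 1) (- M2 + 1)).
  destruct (Rle_dec 0 x).
  - rewrite Rabs_right in Hx by lra. specialize (HM1 x ltac:(lra)). simpl in HM1.
    rewrite Rminus_0_r in HM1. lra.
  - rewrite Rabs_left in Hx by lra. specialize (HM2 x ltac:(lra)). simpl in HM2.
    rewrite Rminus_0_r in HM2. lra.
Qed.

Lemma schwartz_bound phi m : Schwartz phi ->
  exists D, 0 <= D /\ forall x, Cmod (phi x) * (1 + Rabs x) ^ m <= D.
Proof.
  intros Hs. destruct Hs as [[Hu1 Hu2] [Hv1 Hv2]] eqn:E.
  destruct (Hu2 m 0%nat) as [Hup Hum]. destruct (Hv2 m 0%nat) as [Hvp Hvm].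
  simpl in Hup, Hum, Hvp, Hvm.
  destruct (decay_bound _ _ Hup Hum) as [X1 [HX1 HB1]].
  destruct (decay_bound _ _ Hvp Hvm) as [X2 [HX2 HB2]].
  assert (HXe : exists X, X = Rmax X1 X2) by (eexists; reflexivity). destruct HXe as [X HXe].
  assert (HXa : X1 <= X) by (subst; apply Rmax_l). assert (HXb : X2 <= X) by (subst; apply Rmax_r). clear HXe.
  assert (Hc : forall x, continuity_pt (fun y => Cmod (phi y)) x).
  { intros x. apply continuity_pt_filterlim.
    destruct Hs as [Hs1 Hs2]. unfold Cmod.
    apply (lim_comp_cont (fun y => fst (phi y) ^ 2 + snd (phi y) ^ 2) sqrt); [|apply sqrt_continuous].
    assert (C1 := smooth_cont _ Hs1 x). assert (C2 := smooth_cont _ Hs2 x).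
    unfold continuous, Re, Im in C1, C2. simpl.
    apply lim_plus; apply lim_mult; auto; apply lim_mult; auto; apply filterlim_const. }
  destruct (continuity_ab_maj (fun y => Cmod (phi y)) (-X) X) as [Mx [HMx _]].
  { lra. }
  { intros; apply Hc. }
  set (M0 := Cmod (phi Mx)).
  exists (2 ^ (S m) + M0 * (1 + X) ^ m). split.
  { apply Rplus_le_le_0_compat. apply pow_le; lra. apply Rmult_le_pos. apply Cmod_ge_0. apply pow_le; lra. }
  intros x.
  assert (HM0 : 0 <= M0) by apply Cmod_ge_0.
  destruct (Rle_dec (Rabs x) X) as [Hx|Hx].
  - assert (0 <= 2 ^ S m) by (apply pow_le; lra).
    assert (Cmod (phi x) <= M0) by (apply HMx; apply Rabs_le_between; auto).
    assert ((1 + Rabs x) ^ m <= (1 + X) ^ m).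
    { apply pow_incr. generalize (Rabs_pos x); lra. }
    assert (0 <= (1 + Rabs x) ^ m) by (apply pow_le; generalize (Rabs_pos x); lra).
    assert (0 <= Cmod (phi x)) by apply Cmod_ge_0.
    nra.
  - assert (H1 := HB1 x ltac:(lra)). assert (H2 := HB2 x ltac:(lra)).
    rewrite Rabs_mult, <- RPow_abs in H1, H2.
    assert (Hsum := Cmod_le_sum (phi x)).
    assert (Hp : (1 + Rabs x) ^ m <= 2 ^ m * Rabs x ^ m).
    { rewrite <- Rpow_mult_distr. apply pow_incr. lra. }
    assert (0 <= M0 * (1 + X) ^ m) by (apply Rmult_le_pos; auto; apply pow_le; lra).
    assert (0 <= Rabs x ^ m) by (apply pow_le; apply Rabs_pos).
    assert (0 <= Cmod (phi x)) by apply Cmod_ge_0.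
    assert (0 <= 2 ^ m) by (apply pow_le; lra).
    assert (Cmod (phi x) * Rabs x ^ m <= 2).
    { generalize (Rabs_pos (fst (phi x))) (Rabs_pos (snd (phi x))). unfold Re, Im in *. nra. }
    simpl. nra.
Qed.

Lemma RG_ex_RInt k : RG k -> forall a b, ex_RInt k a b.
Proof. intros [HL HP]. apply (@pc_ex_RInt R_CompleteNormedModule); auto. Qed.

Lemma RGC_ex_RInt k : RGC k -> forall a b, ex_RInt k a b.
Proof. intros H. apply (@pc_ex_RInt C_R_CompleteNormedModule). apply RGC_LIMS; auto. apply RGC_PCL; auto. Qed.

Lemma nat_above r : exists n : nat, r <= INR n.
Proof.
  destruct (Rle_dec r 0). exists 0%nat. simpl. lra.
  destruct (archimed r) as [H1 H2]. exists (Z.to_nat (up r)).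
  rewrite INR_IZR_INZ. rewrite Z2Nat.id. lra.
  apply le_IZR. lra.
Qed.

Lemma arith1 y N D K : 1 <= y -> 0 <= D -> 0 <= K ->
  D / y ^ (N + 2) * (K * (1 + y) ^ N) <= 2 ^ (S N) * D * K * (1 / y - 1 / (y + 1)).
Proof.
  intros Hy HD HK.
  assert (Hp : (1 + y) ^ (S N) <= 2 ^ (S N) * y ^ (S N)).
  { rewrite <- Rpow_mult_distr. apply pow_incr. lra. }
  simpl in Hp. rewrite pow_add. simpl.
  assert (HQ : 0 < y ^ N) by (apply pow_lt; lra).
  assert (HP0 : 0 <= (1 + y) ^ N) by (apply pow_le; lra).
  assert (HT : 0 < 2 ^ N) by (apply pow_lt; lra).
  replace (1 / y - 1 / (y + 1)) with (1 / (y * (y + 1))) by (field; lra).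
  replace (D / (y ^ N * (y * (y * 1))) * (K * (1 + y) ^ N)) with
    ((D * K) * ((1 + y) ^ N / (y ^ N * (y * y)))) by (field; lra).
  replace (2 * 2 ^ N * D * K * (1 / (y * (y + 1)))) with
    ((D * K) * (2 * 2 ^ N / (y * (y + 1)))) by (field; lra).
  apply Rmult_le_compat_l. nra.
  assert (Hyy : 0 < y ^ N * (y * y)) by (apply Rmult_lt_0_compat; nra).
  assert (Hy1 : 0 < y * (y + 1)) by nra.
  apply Rle_div_l. exact Hyy.
  replace (2 * 2 ^ N / (y * (y + 1)) * (y ^ N * (y * y))) with (2 * 2 ^ N * y ^ N * y / (y + 1)) by (field; lra).
  apply Rle_div_r. lra.
  nra.
Qed.

Lemma RInt_scal_R (f : R -> R) c a b : ex_RInt f a b -> RInt (fun x => c * f x) a b = c * RInt f a b.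
Proof. intros H. apply (@RInt_scal R_CompleteNormedModule). auto. Qed.

Lemma ex_RInt_scal_R (f : R -> R) c a b : ex_RInt f a b -> ex_RInt (fun x => c * f x) a b.
Proof. intros H. apply (@ex_RInt_scal R_NormedModule). auto. Qed.

Lemma Chasles_R (f : R -> R) a b c : ex_RInt f a b -> ex_RInt f b c -> RInt f a b + RInt f b c = RInt f a c.
Proof. intros H1 H2. apply (@RInt_Chasles R_CompleteNormedModule); auto. Qed.

Lemma shell_bound (f psi : R -> C) K N D :
  RGC f -> RGC psi -> 0 <= D -> 0 < K ->
  (forall r, 0 < r -> RInt (fun x => Cmod (f x)) (-r) r <= K * (1 + r) ^ N) ->
  (forall x, Cmod (psi x) * (1 + Rabs x) ^ (N + 2) <= D) ->
  forall r, 0 <= r -> RInt (fun x => Cmod (f x * psi x)) (-r) r <= 2 ^ (S N) * D * K.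
Proof.
  intros Hf Hpsi HD HK HG HB.
  set (g := fun x => Cmod (f x * psi x)).
  set (F := fun x => Cmod (f x)).
  assert (Hgi : forall a b, ex_RInt g a b).
  { apply RG_ex_RInt. apply RGC_Cmod. apply RGC_mult; auto. }
  assert (HFi : forall a b, ex_RInt F a b).
  { apply RG_ex_RInt. apply RGC_Cmod. auto. }
  assert (Hg0 : forall x, 0 <= g x) by (intros; apply Cmod_ge_0).
  assert (HF0 : forall x, 0 <= F x) by (intros; apply Cmod_ge_0).
  set (C0 := 2 ^ (S N) * D * K).
  assert (HC0 : 0 <= C0).
  { unfold C0. apply Rmult_le_pos. apply Rmult_le_pos; auto. apply pow_le; lra. lra. }
  assert (Hsh : forall (n : nat) a, (forall x, a <= x <= a + 1 -> INR n <= Rabs x) ->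
             RInt g a (a + 1) <= D / (1 + INR n) ^ (N + 2) * RInt F a (a + 1)).
  { intros n a Ha. rewrite <- RInt_scal_R by auto.
    apply RInt_le. lra. auto. apply ex_RInt_scal_R. auto.
    intros x Hx. unfold g, F. rewrite Cmod_mult.
    assert (Hn := pos_INR n).
    assert (Hpow : (1 + INR n) ^ (N + 2) <= (1 + Rabs x) ^ (N + 2)).
    { apply pow_incr. specialize (Ha x ltac:(lra)). lra. }
    assert (Hpos : 0 < (1 + INR n) ^ (N + 2)) by (apply pow_lt; lra).
    assert (Hc : Cmod (psi x) <= D / (1 + INR n) ^ (N + 2)).
    { apply Rle_div_r. lra. specialize (HB x).
      assert (0 <= Cmod (psi x)) by apply Cmod_ge_0. nra. }
    rewrite Rmult_comm. apply Rmult_le_compat_r. apply Cmod_ge_0. exact Hc. }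
  assert (Hind : forall n : nat, RInt g (- INR n) (INR n) <= C0 * (1 - 1 / (INR n + 1))).
  { induction n as [|n IH].
    - simpl. rewrite Ropp_0. rewrite (@RInt_point R_CompleteNormedModule). replace (1 - 1 / (0 + 1)) with 0 by field. rewrite Rmult_0_r. apply Rle_refl.
    - rewrite S_INR.
      assert (Hn := pos_INR n).
      assert (E1 := Chasles_R g (-(INR n + 1)) (- INR n) (INR n + 1) (Hgi _ _) (Hgi _ _)).
      assert (E2 := Chasles_R g (- INR n) (INR n) (INR n + 1) (Hgi _ _) (Hgi _ _)).
      assert (E3 := Chasles_R F (-(INR n + 1)) (- INR n) (INR n + 1) (HFi _ _) (HFi _ _)).
      assert (E4 := Chasles_R F (- INR n) (INR n) (INR n + 1) (HFi _ _) (HFi _ _)).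
      assert (S1 := Hsh n (INR n) ltac:(intros x Hx; rewrite Rabs_right; lra)).
      assert (S2 := Hsh n (-(INR n + 1)) ltac:(intros x Hx; rewrite Rabs_left1; lra)).
      replace (-(INR n + 1) + 1) with (- INR n) in S2 by ring.
      assert (HFn : 0 <= RInt F (- INR n) (INR n)) by (apply RInt_ge_0; auto; lra).
      assert (HGr := HG (INR n + 1) ltac:(lra)).
      assert (Ha := arith1 (1 + INR n) N D K ltac:(lra) HD ltac:(lra)).
      set (c := D / (1 + INR n) ^ (N + 2)) in *.
      assert (Hc0 : 0 <= c).
      { unfold c. apply Rle_div_r. apply pow_lt; lra. rewrite Rmult_0_l. auto. }
      replace (1 + (INR n + 1)) with (1 + (1 + INR n)) in HGr by ring.
      replace (1 + INR n + 1) with (INR n + 1 + 1) in Ha by ring.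
      replace (1 / (1 + INR n)) with (1 / (INR n + 1)) in Ha by (f_equal; ring).
      fold C0 in Ha.
      assert (c * (RInt F (INR n) (INR n + 1) + RInt F (- (INR n + 1)) (- INR n)) <= c * (K * (1 + (1 + INR n)) ^ N)).
      { apply Rmult_le_compat_l; auto. change (fun x => Cmod (f x)) with F in HGr. lra. }
      lra. }
  intros r Hr. destruct (nat_above r) as [n Hn].
  apply Rle_trans with (RInt g (- INR n) (INR n)).
  apply RInt_sub_le; auto; lra.
  apply Rle_trans with (1 := Hind n).
  assert (0 < 1 / (INR n + 1)) by (assert (Hn' := pos_INR n); apply Rdiv_lt_0_compat; lra).
  nra.
Qed.

Lemma Cmult_lim {T} {F : (T -> Prop) -> Prop} {FF : Filter F} (f g : T -> C) a b :
  filterlim f F (locally a) -> filterlim g F (locally b) ->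
  filterlim (fun x => (f x * g x)%C) F (locally (a * b)%C).
Proof.
  intros Hf Hg. apply Clim_iff in Hf. apply Clim_iff in Hg.
  destruct Hf as [Hf1 Hf2]. destruct Hg as [Hg1 Hg2].
  apply Clim_iff. simpl. split.
  - apply lim_minus; apply lim_mult; auto.
  - apply lim_plus; apply lim_mult; auto.
Qed.

Lemma SG_RGC f : SG f -> RGC f.
Proof. intros [H _]. apply PC_bj_RGC; auto. Qed.

Lemma conv_R (k : R -> R) B : (forall x, 0 <= k x) -> (forall a b, ex_RInt k a b) ->
  (forall r, 0 <= r -> RInt k (-r) r <= B) ->
  ex_RInt_gen k (Rbar_locally m_infty) (Rbar_locally p_infty).
Proof.
  intros H0 Hi HB. apply (@conv_gen R_CompleteNormedModule k B); auto.
  - intros a b. apply ex_RInt_ext with k; auto. intros x _. simpl. unfold abs; simpl. rewrite Rabs_right; auto. apply Rle_ge; auto.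
  - intros r Hr. rewrite RInt_ext with (g := k). auto.
    intros x _. simpl. unfold abs; simpl. rewrite Rabs_right; auto. apply Rle_ge; auto.
Qed.

Lemma prod_bound f phi : SG f -> Schwartz phi -> exists B,
  forall r, 0 <= r -> RInt (fun x => Cmod (f x * phi x)) (-r) r <= B.
Proof.
  intros Hf Hphi. destruct Hf as [Hpc [K [N [HK HG]]]].
  destruct (schwartz_bound phi (N + 2) Hphi) as [D [HD HDb]].
  exists (2 ^ (S N) * D * K). apply shell_bound; auto.
  apply PC_bj_RGC; auto. apply schwartz_cont; auto.
Qed.

Theorem part1 : forall f phi : R -> C, SG f -> Schwartz phi ->
     piecewise_continuous (fun x => (f x * phi x)%C) /\
     abs_integrable (fun x => (f x * phi x)%C).
Proof.
  intros f phi Hf Hphi. split.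
  - intros a b. destruct Hf as [[Hpc _] _]. destruct (Hpc a b) as [l [Hl1 Hl2]].
    exists l. split.
    + intros x Hx Hn. unfold continuous. apply Cmult_lim. apply Hl1; auto.
      apply schwartz_cont_C; auto.
    + intros x Hx. destruct (Hl2 x Hx) as [lp [lm [H1 H2]]].
      exists (lp * phi x)%C, (lm * phi x)%C. split; apply Cmult_lim; auto;
      (eapply filterlim_filter_le_1; [apply filter_le_within| apply schwartz_cont_C; auto]).
  - destruct (prod_bound f phi Hf Hphi) as [B HB].
    apply conv_R with B; auto.
    + intros; apply Cmod_ge_0.
    + apply RG_ex_RInt. apply RGC_Cmod. apply RGC_mult. apply SG_RGC; auto. apply schwartz_cont; auto.
Qed.

Lemma prod_int f phi : SG f -> Schwartz phi ->
  is_RInt_gen (fun x => (f x * phi x)%C) (Rbar_locally m_infty) (Rbar_locally p_infty)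
    (int_R (fun x => (f x * phi x)%C)).
Proof.
  intros Hf Hphi. unfold int_R. apply (@RInt_gen_correct C_R_CompleteNormedModule); try exact _.
  destruct (prod_bound f phi Hf Hphi) as [B HB].
  assert (Hi : RGC (fun x => (f x * phi x)%C)).
  { apply RGC_mult. apply SG_RGC; auto. apply schwartz_cont; auto. }
  apply (@conv_gen C_R_CompleteNormedModule _ B).
  - apply RGC_ex_RInt; auto.
  - intros a b. apply ex_RInt_ext with (fun x => Cmod (f x * phi x)%C).
    intros x _. apply Cmod_norm.
    apply RG_ex_RInt. apply RGC_Cmod. auto.
  - intros r Hr. rewrite RInt_ext with (g := fun x => Cmod (f x * phi x)%C). auto.
    intros x _. symmetry. apply Cmod_norm.
Qed.

Lemma lim_from_bound (f : R -> R) A Rz :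
  (forall x, Rz <= Rabs x -> Rabs (f x) * Rabs x <= A) ->
  is_lim f p_infty 0 /\ is_lim f m_infty 0.
Proof.
  intros H. split; apply is_lim_spec; intros eps; simpl.
  - exists (Rmax (Rmax Rz 1) (Rabs A / eps + 1)). intros x Hx.
    assert (H1 := Rmax_l (Rmax Rz 1) (Rabs A / eps + 1)).
    assert (H2 := Rmax_r (Rmax Rz 1) (Rabs A / eps + 1)).
    assert (H3 := Rmax_l Rz 1). assert (H4 := Rmax_r Rz 1).
    assert (Hx0 : 0 < x) by lra.
    assert (Hr : Rz <= Rabs x) by (rewrite Rabs_right; lra). specialize (H x Hr). rewrite (Rabs_right x) in H by lra.
    rewrite Rminus_0_r.
    assert (Ha : A <= Rabs A) by apply Rle_abs.
    assert (He := cond_pos eps).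
    assert (Rabs A / eps * eps = Rabs A) by (field; lra).
    assert (Hf := Rabs_pos (f x)). nra.
  - exists (- Rmax (Rmax Rz 1) (Rabs A / eps + 1)). intros x Hx.
    assert (H1 := Rmax_l (Rmax Rz 1) (Rabs A / eps + 1)).
    assert (H2 := Rmax_r (Rmax Rz 1) (Rabs A / eps + 1)).
    assert (H3 := Rmax_l Rz 1). assert (H4 := Rmax_r Rz 1).
    assert (Hx0 : x < 0) by lra.
    assert (Hr : Rz <= Rabs x) by (rewrite Rabs_left; lra). specialize (H x Hr). rewrite (Rabs_left x) in H by lra.
    rewrite Rminus_0_r.
    assert (Ha : A <= Rabs A) by apply Rle_abs.
    assert (He := cond_pos eps).
    assert (Rabs A / eps * eps = Rabs A) by (field; lra).
    assert (Hf := Rabs_pos (f x)). nra.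
Qed.

Lemma exp_mult_pow z k : exp (INR k * z) = exp z ^ k.
Proof.
  induction k as [|k IH]. simpl. rewrite Rmult_0_l. apply exp_0.
  rewrite S_INR. replace ((INR k + 1) * z) with (INR k * z + z) by ring.
  rewrite exp_plus, IH. simpl. ring.
Qed.

Lemma exp_ge_pow y k : 0 <= y -> (y / INR (S k)) ^ (S k) <= exp y.
Proof.
  intros Hy. assert (HK : 0 < INR (S k)) by (apply lt_0_INR; lia).
  replace y with (INR (S k) * (y / INR (S k))) at 2 by (field; lra).
  rewrite exp_mult_pow. apply pow_incr. split.
  apply Rdiv_le_0_compat; lra. generalize (exp_ineq1_le (y / INR (S k))). lra.
Qed.

Definition gauss c x0 x := exp (- (c * (x - x0) ^ 2)).

Lemma gauss_pos c x0 x : 0 < gauss c x0 x.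
Proof. apply exp_pos. Qed.

Lemma gauss_decay c x0 j : 0 < c ->
  is_lim (fun x => x ^ j * gauss c x0 x) p_infty 0 /\ is_lim (fun x => x ^ j * gauss c x0 x) m_infty 0.
Proof.
  intros Hc. set (K := INR (S j)). assert (HK : 0 < K) by (apply lt_0_INR; lia).
  apply lim_from_bound with (A := (4 * K / c) ^ (S j)) (Rz := 2 * Rabs x0 + 1).
  intros x Hx. set (a := Rabs x) in *.
  assert (Ha1 : 1 <= a) by (generalize (Rabs_pos x0); lra).
  assert (Hxx : a / 2 <= Rabs (x - x0)).
  { generalize (Rabs_triang_inv x x0). fold a. generalize (Rabs_pos x0). lra. }
  assert (Hy : c * (a / 2) ^ 2 <= c * (x - x0) ^ 2).
  { apply Rmult_le_compat_l. lra. rewrite <- (pow2_abs (x - x0)). apply pow_incr. lra. }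
  set (y := c * (x - x0) ^ 2) in *.
  assert (Hy0 : 0 <= c * (a / 2) ^ 2) by (apply Rmult_le_pos; [lra|apply pow2_ge_0]).
  assert (He := exp_ge_pow y j ltac:(lra)). fold K in He.
  assert (He2 : (c * (a/2)^2 / K) ^ S j <= (y / K) ^ S j).
  { apply pow_incr. split. apply Rdiv_le_0_compat; lra. unfold Rdiv. apply Rmult_le_compat_r.
    apply Rlt_le, Rinv_0_lt_compat; lra. lra. }
  unfold gauss. fold y. rewrite Rabs_mult, <- RPow_abs. fold a.
  rewrite (Rabs_right (exp (- y))) by (apply Rle_ge, Rlt_le, exp_pos).
  rewrite exp_Ropp.
  assert (Hprod : (4 * K / c) ^ S j * (c * (a / 2) ^ 2 / K) ^ S j = (a ^ 2) ^ S j).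
  { rewrite <- Rpow_mult_distr. f_equal. field. lra. }
  assert (Hak : a ^ S j <= (a ^ 2) ^ S j).
  { apply pow_incr. split. lra. simpl. nra. }
  assert (HA0 : 0 <= (4 * K / c) ^ S j) by (apply pow_le; apply Rdiv_le_0_compat; lra).
  assert (Hexp := exp_pos y).
  replace (a ^ j * / exp y * a) with (a ^ S j / exp y) by (simpl; field; lra).
  apply Rle_div_l. lra. nra.
Qed.

Lemma isd_plus (f g : R -> R) (x a b : R) : is_derive f x a -> is_derive g x b ->
  is_derive (fun y => f y + g y) x (a + b).
Proof. intros. apply (@is_derive_plus R_AbsRing R_NormedModule); auto. Qed.

Lemma isd_mult (f g : R -> R) (x a b : R) : is_derive f x a -> is_derive g x b ->
  is_derive (fun y => f y * g y) x (a * g x + f x * b).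
Proof. intros. apply (@is_derive_mult R_AbsRing); auto. intros; apply Rmult_comm. Qed.

Lemma isd_const (c x : R) : is_derive (fun _ => c) x 0.
Proof. apply (@is_derive_const R_AbsRing R_NormedModule). Qed.

Lemma isd_id (x : R) : is_derive (fun y => y) x 1.
Proof. apply (@is_derive_id R_AbsRing). Qed.

Lemma isd_ext (f g : R -> R) (x a b : R) : (forall y, f y = g y) -> a = b -> is_derive f x a -> is_derive g x b.
Proof. intros He -> H. apply (@is_derive_ext R_AbsRing R_NormedModule) with f; auto. Qed.

Fixpoint peval (l : list R) (x : R) : R :=
  match l with nil => 0 | a :: l' => a + x * peval l' x end.

Fixpoint padd (l1 l2 : list R) : list R :=
  match l1, l2 with
  | nil, _ => l2
  | _, nil => l1
  | a :: l1', b :: l2' => (a + b) :: padd l1' l2'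
  end.

Definition pscale (c : R) (l : list R) := map (fun a => c * a) l.

Fixpoint pder (l : list R) : list R :=
  match l with nil => nil | a :: l' => padd l' (0 :: pder l') end.

Lemma peval_padd l1 l2 x : peval (padd l1 l2) x = peval l1 x + peval l2 x.
Proof.
  revert l2. induction l1 as [|a l1 IH]; intros [|b l2]; simpl; try ring.
  rewrite IH. ring.
Qed.

Lemma peval_pscale c l x : peval (pscale c l) x = c * peval l x.
Proof.
  induction l as [|a l IH]; [simpl; ring|].
  change (peval (pscale c (a :: l)) x) with (c * a + x * peval (pscale c l) x).
  rewrite IH. simpl. ring.
Qed.

Lemma peval_der l x : is_derive (peval l) x (peval (pder l) x).
Proof.
  induction l as [|a l IH].
  - simpl. apply isd_ext with (fun _ => 0) 0; auto. apply isd_const.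
  - simpl. rewrite peval_padd. simpl.
    apply isd_ext with (fun y => a + y * peval l y) (0 + (1 * peval l x + x * peval (pder l) x)).
    + intros; reflexivity.
    + ring.
    + apply isd_plus. apply isd_const. apply isd_mult. apply isd_id. auto.
Qed.

Lemma gauss_der c x0 x : is_derive (gauss c x0) x (-2 * c * (x - x0) * gauss c x0 x).
Proof.
  unfold gauss. auto_derive. auto.
  match goal with |- _ * exp ?a = _ * exp ?b => replace a with b by ring end; ring.
Qed.

Fixpoint Pn (c x0 : R) (n : nat) : list R :=
  match n with
  | O => 1 :: nil
  | S n => padd (pder (Pn c x0 n)) (pscale (-2 * c) (padd (0 :: Pn c x0 n) (pscale (- x0) (Pn c x0 n))))
  end.

Lemma gauss_Derive_n c x0 n x : Derive_n (gauss c x0) n x = peval (Pn c x0 n) x * gauss c x0 x.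
Proof.
  revert x. induction n as [|n IH]; intros x.
  - simpl. ring.
  - simpl Derive_n. rewrite (Derive_ext _ _ x IH).
    apply is_derive_unique.
    apply isd_ext with (fun y => peval (Pn c x0 n) y * gauss c x0 y)
      (peval (pder (Pn c x0 n)) x * gauss c x0 x + peval (Pn c x0 n) x * (-2 * c * (x - x0) * gauss c x0 x)).
    reflexivity.
    change (Pn c x0 (S n)) with (padd (pder (Pn c x0 n)) (pscale (-2 * c) (padd (0 :: Pn c x0 n) (pscale (- x0) (Pn c x0 n))))).
    rewrite peval_padd, peval_pscale, peval_padd, peval_pscale.
    change (peval (0 :: Pn c x0 n) x) with (0 + x * peval (Pn c x0 n) x). ring.
    apply isd_mult. apply peval_der. apply gauss_der.
Qed.

Lemma poly_gauss_lim c x0 l : 0 < c -> forall j,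
  is_lim (fun x => x ^ j * (peval l x * gauss c x0 x)) p_infty 0 /\
  is_lim (fun x => x ^ j * (peval l x * gauss c x0 x)) m_infty 0.
Proof.
  intros Hc. induction l as [|a l IH]; intros j.
  - simpl. split; apply is_lim_ext with (fun _ => 0); try (intros; ring); apply is_lim_const.
  - destruct (gauss_decay c x0 j Hc) as [H1 H2]. destruct (IH (S j)) as [H3 H4].
    split.
    + apply is_lim_ext with (fun x => a * (x ^ j * gauss c x0 x) + x ^ S j * (peval l x * gauss c x0 x)).
      intros; simpl; ring.
      eapply is_lim_plus. apply is_lim_scal_l. exact H1. exact H3. unfold is_Rbar_plus; simpl. rewrite Rmult_0_r, Rplus_0_r. reflexivity.
    + apply is_lim_ext with (fun x => a * (x ^ j * gauss c x0 x) + x ^ S j * (peval l x * gauss c x0 x)).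
      intros; simpl; ring.
      eapply is_lim_plus. apply is_lim_scal_l. exact H2. exact H4. unfold is_Rbar_plus; simpl. rewrite Rmult_0_r, Rplus_0_r. reflexivity.
Qed.

Lemma smooth_zero (u : R -> R) : (forall x, u x = 0) -> smooth_decay u.
Proof.
  intros Hu.
  assert (HD : forall n x, Derive_n u n x = 0).
  { intros [|n] x. simpl. auto. rewrite (Derive_n_ext u (fun _ => 0) (S n) x Hu). apply Derive_n_const. }
  split.
  - intros n x. apply (@ex_derive_ext R_AbsRing R_NormedModule) with (fun _ => 0).
    intros; rewrite HD; auto. apply (@ex_derive_const R_AbsRing R_NormedModule).
  - intros m n. split; apply is_lim_ext with (fun _ => 0);
      try (intros; rewrite HD; ring); apply is_lim_const.
Qed.

Lemma gauss_smooth c x0 : 0 < c -> smooth_decay (gauss c x0).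
Proof.
  intros Hc. split.
  - intros n x. apply (@ex_derive_ext R_AbsRing R_NormedModule) with (fun y => peval (Pn c x0 n) y * gauss c x0 y).
    intros; rewrite gauss_Derive_n; auto.
    eexists. apply isd_mult. apply peval_der. apply gauss_der.
  - intros m n. destruct (poly_gauss_lim c x0 (Pn c x0 n) Hc m) as [H1 H2].
    split; (eapply is_lim_ext; [|eauto]); intros; simpl; rewrite gauss_Derive_n; auto.
Qed.

Definition gaussC c x0 := fun x => RtoC (gauss c x0 x).

Lemma gauss_schwartz c x0 : 0 < c -> Schwartz (gaussC c x0).
Proof.
  intros Hc. split.
  - unfold gaussC. simpl. apply gauss_smooth; auto.
  - apply smooth_zero. intros; reflexivity.
Qed.

Lemma RInt_minus_R (f h : R -> R) a b : ex_RInt f a b -> ex_RInt h a b ->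
  RInt (fun x => f x - h x) a b = RInt f a b - RInt h a b.
Proof. intros. apply (@RInt_minus R_CompleteNormedModule); auto. Qed.

Lemma RInt_swap_R (f : R -> R) a b : ex_RInt f a b -> RInt f b a = - RInt f a b.
Proof.
  intros H. assert (H' : ex_RInt f b a) by (apply ex_RInt_swap; auto).
  assert (E := Chasles_R f a b a H H').
  assert (Z : RInt f a a = 0) by (apply (@RInt_point R_CompleteNormedModule)). lra.
Qed.

Lemma RInt_const_R (c a b : R) : RInt (fun _ => c) a b = (b - a) * c.
Proof. rewrite (@RInt_const R_CompleteNormedModule). reflexivity. Qed.

Lemma abs_RInt_le_open (f g : R -> R) a b : a <= b -> ex_RInt f a b -> ex_RInt g a b ->
  (forall x, a < x < b -> Rabs (f x) <= g x) -> Rabs (RInt f a b) <= RInt g a b.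
Proof.
  intros Hab Hf Hg H. eapply Rle_trans. apply abs_RInt_le; auto.
  apply RInt_le; auto. apply ex_RInt_norm in Hf. exact Hf.
Qed.

Lemma gauss_cont c x0 x : continuous (gauss c x0) x.
Proof. apply exd_cont. eexists. apply gauss_der. Qed.

Lemma RG_gauss c x0 : RG (gauss c x0).
Proof. apply RG_cont. apply gauss_cont. Qed.

Lemma gauss_split c x0 x : gauss c x0 x = exp (- ((c - 1) * (x - x0) ^ 2)) * gauss 1 x0 x.
Proof. unfold gauss. rewrite <- exp_plus. f_equal. ring. Qed.

Lemma exp_le_mono x y : x <= y -> exp x <= exp y.
Proof. intros [H|H]. left; apply exp_increasing; auto. right; rewrite H; reflexivity. Qed.

Lemma gauss_far c x0 d x : 1 <= c -> d ^ 2 <= (x - x0) ^ 2 ->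
  gauss c x0 x <= exp (- ((c - 1) * d ^ 2)) * gauss 1 x0 x.
Proof.
  intros Hc Hd. rewrite gauss_split. apply Rmult_le_compat_r. apply Rlt_le, gauss_pos.
  apply exp_le_mono. apply Ropp_le_contravar. apply Rmult_le_compat_l; lra.
Qed.

Lemma gauss_near c x0 s x : 0 < s -> c = s ^ 2 -> x0 <= x <= x0 + / s -> / 3 <= gauss c x0 x.
Proof.
  intros Hs Hc Hx. unfold gauss.
  assert (H1 : c * (x - x0) ^ 2 <= 1).
  { subst c. rewrite <- Rpow_mult_distr. replace 1 with (1 ^ 2) by ring.
    apply pow_incr. split. apply Rmult_le_pos; lra.
    assert (s * (x - x0) <= s * / s) by (apply Rmult_le_compat_l; lra).
    rewrite Rinv_r in H by lra. lra. }
  apply Rle_trans with (exp (Ropp 1)).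
  - rewrite exp_Ropp. apply Rinv_le_contravar. apply exp_pos. apply exp_le_3.
  - apply exp_le_mono. lra.
Qed.

Lemma exp_neg_le z : 0 < z -> exp (- z) <= / z.
Proof.
  intros Hz. rewrite exp_Ropp. apply Rinv_le_contravar. auto.
  generalize (exp_ineq1_le z). lra.
Qed.

Lemma gauss_sym c x0 d : 0 <= d -> RInt (gauss c x0) (x0 - d) x0 = RInt (gauss c x0) x0 (x0 + d).
Proof.
  intros Hd.
  assert (Hi : forall u v, ex_RInt (gauss c x0) u v) by (apply RG_ex_RInt, RG_gauss).
  assert (E := @RInt_comp_lin R_CompleteNormedModule (gauss c x0) (-1) (2 * x0) x0 (x0 + d) (Hi _ _)).
  replace (-1 * x0 + 2 * x0) with x0 in E by ring.
  replace (-1 * (x0 + d) + 2 * x0) with (x0 - d) in E by ring.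
  rewrite (RInt_swap_R _ (x0 - d) x0 (Hi _ _)) in E.
  match type of E with ?L = _ => assert (E2 : L = -1 * RInt (gauss c x0) x0 (x0 + d)) end.
  { rewrite (RInt_ext _ (fun y => -1 * gauss c x0 y)).
    apply RInt_scal_R. auto.
    intros y _. unfold gauss. unfold scal; simpl; unfold mult; simpl.
    match goal with |- ?A = ?B => change (@eq R A B) end. apply f_equal2; [reflexivity|]. apply f_equal. ring. }
  rewrite E2 in E. lra.
Qed.

Lemma approx_id (u : R -> R) x0 a b B :
  RG u ->
  (forall R, 0 <= R -> RInt (fun x => Rabs (u x) * gauss 1 x0 x) (-R) R <= B) ->
  (forall c, 1 <= c -> forall eta, 0 < eta -> forall R0, exists R, R0 <= R /\
       Rabs (RInt (fun x => u x * gauss c x0 x) (-R) R) < eta) ->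
  filterlim u (at_right x0) (locally a) -> filterlim u (at_left x0) (locally b) ->
  a + b = 0.
Proof.
  intros HRG HB HI Ha Hb.
  assert (Hint_ug : forall c p q, ex_RInt (fun x => u x * gauss c x0 x) p q).
  { intros. apply RG_ex_RInt. apply RG_mult; auto. apply RG_gauss. }
  assert (Hint_aug : forall c p q, ex_RInt (fun x => Rabs (u x) * gauss c x0 x) p q).
  { intros. apply RG_ex_RInt. apply RG_mult. apply RG_comp; auto. apply continuous_Rabs. apply RG_gauss. }
  assert (Hint_g : forall c p q, ex_RInt (gauss c x0) p q).
  { intros. apply RG_ex_RInt. apply RG_gauss. }
  assert (HB0 : 0 <= B).
  { specialize (HB 0 (Rle_refl 0)). rewrite Ropp_0 in HB.
    rewrite (@RInt_point R_CompleteNormedModule) in HB. exact HB. }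
  assert (Main : forall eps, 0 < eps -> Rabs (a + b) <= 4 * eps).
  { intros eps Heps.
    apply filterlim_locally with (eps := mkposreal eps Heps) in Ha. destruct Ha as [d1 Hd1].
    apply filterlim_locally with (eps := mkposreal eps Heps) in Hb. destruct Hb as [d2 Hd2].
    set (d := Rmin d1 d2).
    assert (Hd : 0 < d) by (apply Rmin_pos; apply cond_pos).
    assert (Hdd1 : d <= d1) by apply Rmin_l. assert (Hdd2 : d <= d2) by apply Rmin_r.
    assert (Hright : forall x, x0 < x < x0 + d -> Rabs (u x - a) < eps).
    { intros x Hx. apply ball_R. apply Hd1. apply R_ball. rewrite Rabs_right; lra. lra. }
    assert (Hleft : forall x, x0 - d < x < x0 -> Rabs (u x - b) < eps).
    { intros x Hx. apply ball_R. apply Hd2. apply R_ball. rewrite Rabs_left; lra. lra. }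
    set (s := Rmax (Rmax 2 (/ d)) (6 * B / (eps * d ^ 2) + 1)).
    assert (Hs1 := Rmax_l (Rmax 2 (/ d)) (6 * B / (eps * d ^ 2) + 1)).
    assert (Hs2 := Rmax_r (Rmax 2 (/ d)) (6 * B / (eps * d ^ 2) + 1)).
    assert (Hs3 := Rmax_l 2 (/ d)). assert (Hs4 := Rmax_r 2 (/ d)).
    fold s in Hs1, Hs2.
    assert (Hs : 2 <= s) by lra.
    set (c := s ^ 2).
    assert (Hc : 4 <= c) by (unfold c; simpl; nra).
    set (g := gauss c x0).
    set (A := RInt g x0 (x0 + d)).
    assert (HA : / (3 * s) <= A).
    { assert (Hsd : / s <= d).
      { apply Rle_trans with (/ / d). apply Rinv_le_contravar. apply Rinv_0_lt_compat; lra. lra.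
        rewrite Rinv_inv. lra. }
      apply Rle_trans with (RInt g x0 (x0 + / s)).
      - apply Rle_trans with (RInt (fun _ => / 3) x0 (x0 + / s)).
        + rewrite RInt_const_R. right. field. lra.
        + apply RInt_le. assert (0 < / s) by (apply Rinv_0_lt_compat; lra). lra.
          apply (@ex_RInt_const R_NormedModule). apply Hint_g.
          intros x Hx. apply (gauss_near c x0 s x). lra. reflexivity. lra.
      - apply RInt_sub_le. intros; apply Rlt_le, gauss_pos. apply Hint_g. lra.
        assert (0 < / s) by (apply Rinv_0_lt_compat; lra). lra. lra. }
    assert (HA0 : 0 < A).
    { eapply Rlt_le_trans; [|exact HA]. apply Rinv_0_lt_compat. lra. }
    assert (Hc1 : 1 <= c) by lra.
    destruct (HI c Hc1 (eps * A) ltac:(nra) (Rabs x0 + d)) as [Rr [HR HIR]].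
    assert (Hx1 := Rle_abs x0). assert (Hx2 : - x0 <= Rabs x0) by (rewrite <- Rabs_Ropp; apply Rle_abs).
    assert (HR1 : - Rr <= x0 - d) by lra.
    assert (HR2 : x0 + d <= Rr) by lra.
    set (ug := fun x => u x * gauss c x0 x) in *.
    set (I := RInt ug (-Rr) Rr) in *.
    set (I1 := RInt ug (-Rr) (x0 - d)). set (I2 := RInt ug (x0 - d) x0).
    set (I3 := RInt ug x0 (x0 + d)). set (I4 := RInt ug (x0 + d) Rr).
    assert (HIs : I = I1 + I2 + I3 + I4).
    { unfold I, I1, I2, I3, I4.
      rewrite <- (Chasles_R ug (-Rr) (x0 - d) Rr) by apply Hint_ug.
      rewrite <- (Chasles_R ug (x0 - d) x0 Rr) by apply Hint_ug.
      rewrite <- (Chasles_R ug x0 (x0 + d) Rr) by apply Hint_ug. match goal with |- ?A = ?B => change (@eq R A B) end; ring. }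
    assert (H3 : Rabs (I3 - a * A) <= eps * A).
    { unfold I3, A. rewrite <- RInt_scal_R by apply Hint_g.
      rewrite <- RInt_minus_R. 2: apply Hint_ug. 2: apply ex_RInt_scal_R, Hint_g.
      rewrite <- RInt_scal_R by apply Hint_g.
      apply abs_RInt_le_open. lra.
      apply (@ex_RInt_minus R_NormedModule). apply Hint_ug. apply ex_RInt_scal_R, Hint_g.
      apply ex_RInt_scal_R, Hint_g.
      intros x Hx. unfold ug, g.
      replace (u x * gauss c x0 x - a * gauss c x0 x) with ((u x - a) * gauss c x0 x) by ring.
      rewrite Rabs_mult, (Rabs_right (gauss c x0 x)) by (apply Rle_ge, Rlt_le, gauss_pos).
      apply Rmult_le_compat_r. apply Rlt_le, gauss_pos. apply Rlt_le, Hright. lra. }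
    assert (H2 : Rabs (I2 - b * A) <= eps * A).
    { unfold I2, A, g. rewrite <- gauss_sym by lra. rewrite <- RInt_scal_R by apply Hint_g.
      rewrite <- RInt_minus_R. 2: apply Hint_ug. 2: apply ex_RInt_scal_R, Hint_g.
      rewrite <- RInt_scal_R by apply Hint_g.
      apply abs_RInt_le_open. lra.
      apply (@ex_RInt_minus R_NormedModule). apply Hint_ug. apply ex_RInt_scal_R, Hint_g.
      apply ex_RInt_scal_R, Hint_g.
      intros x Hx. unfold ug, g.
      replace (u x * gauss c x0 x - b * gauss c x0 x) with ((u x - b) * gauss c x0 x) by ring.
      rewrite Rabs_mult, (Rabs_right (gauss c x0 x)) by (apply Rle_ge, Rlt_le, gauss_pos).
      apply Rmult_le_compat_r. apply Rlt_le, gauss_pos. apply Rlt_le, Hleft. lra. }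
    set (k := exp (- ((c - 1) * d ^ 2))).
    assert (Hk0 : 0 < k) by apply exp_pos.
    set (au := fun x => Rabs (u x) * gauss 1 x0 x).
    assert (Hfar : forall p q, p <= q -> (forall x, p < x < q -> d ^ 2 <= (x - x0) ^ 2) ->
               Rabs (RInt ug p q) <= k * RInt au p q).
    { intros p q Hpq Hx. rewrite <- RInt_scal_R by apply Hint_aug.
      apply abs_RInt_le_open; [exact Hpq | apply Hint_ug | apply ex_RInt_scal_R, Hint_aug | ].
      intros x Hx'. unfold ug, au. rewrite Rabs_mult, (Rabs_right (gauss c x0 x)) by (apply Rle_ge, Rlt_le, gauss_pos).
      assert (Hg := gauss_far c x0 d x Hc1 (Hx x Hx')). fold k in Hg.
      assert (0 <= Rabs (u x)) by apply Rabs_pos. nra. }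
    assert (H1 : Rabs I1 <= k * RInt au (-Rr) (x0 - d)).
    { apply Hfar. lra. intros x Hx. replace ((x - x0) ^ 2) with ((x0 - x) ^ 2) by ring.
      apply pow_incr. lra. }
    assert (H4 : Rabs I4 <= k * RInt au (x0 + d) Rr).
    { apply Hfar. lra. intros x Hx. apply pow_incr. lra. }
    assert (Hau : RInt au (-Rr) (x0 - d) + RInt au (x0 + d) Rr <= B).
    { assert (HBR := HB Rr ltac:(lra)). fold au in HBR.
      rewrite <- (Chasles_R au (-Rr) (x0 - d) Rr) in HBR by apply Hint_aug.
      rewrite <- (Chasles_R au (x0 - d) (x0 + d) Rr) in HBR by apply Hint_aug.
      assert (0 <= RInt au (x0 - d) (x0 + d)).
      { apply RInt_ge_0. lra. apply Hint_aug. intros; unfold au. apply Rmult_le_pos. apply Rabs_pos. apply Rlt_le, gauss_pos. }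
      lra. }
    assert (HkB : k * B <= eps * A).
    { assert (Hcd : 0 < (c - 1) * d ^ 2) by (apply Rmult_lt_0_compat; [lra| apply pow_lt; lra]).
      apply Rle_trans with (/ ((c - 1) * d ^ 2) * B).
      apply Rmult_le_compat_r; auto. apply exp_neg_le; auto.
      apply Rle_trans with (eps * / (3 * s)). 2: apply Rmult_le_compat_l; lra.
      assert (Hsb : 6 * B <= eps * d ^ 2 * s).
      { assert (Hed : 0 < eps * d ^ 2) by (apply Rmult_lt_0_compat; [lra|apply pow_lt; lra]).
        assert (6 * B / (eps * d ^ 2) * (eps * d ^ 2) = 6 * B) by (field; lra). nra. }
      assert (Hcs : s ^ 2 / 2 <= c - 1) by (unfold c; simpl; nra).
      apply Rle_trans with (B / ((c - 1) * d ^ 2)). right. unfold Rdiv. ring.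
      apply Rle_div_l. exact Hcd.
      replace (eps * / (3 * s) * ((c - 1) * d ^ 2)) with ((eps * d ^ 2 * s) * ((c - 1) / (3 * s ^ 2))) by (field; lra).
      assert (Hq : / 6 <= (c - 1) / (3 * s ^ 2)).
      { apply Rle_div_r. nra. nra. }
      assert (0 <= eps * d ^ 2 * s) by (apply Rmult_le_pos; [apply Rmult_le_pos; [lra| apply pow_le; lra]|lra]).
      nra. }
    assert (HAB : (a + b) * A = I - I1 - I4 - (I2 - b * A) - (I3 - a * A)) by (rewrite HIs; ring).
    assert (Habs : Rabs ((a + b) * A) <= 4 * eps * A).
    { rewrite HAB.
      assert (T : forall p q, Rabs (p - q) <= Rabs p + Rabs q).
      { intros p q. unfold Rminus. eapply Rle_trans. apply Rabs_triang. rewrite Rabs_Ropp. lra. }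
      assert (T1 := T (I - I1 - I4 - (I2 - b * A)) (I3 - a * A)).
      assert (T2 := T (I - I1 - I4) (I2 - b * A)).
      assert (T3 := T (I - I1) I4).
      assert (T4 := T I I1).
      assert (Hk2 : k * RInt au (- Rr) (x0 - d) + k * RInt au (x0 + d) Rr <= k * B).
      { rewrite <- Rmult_plus_distr_l. apply Rmult_le_compat_l; lra. }
      fold ug in HIR. fold I in HIR. lra. }
    rewrite Rabs_mult, (Rabs_right A) in Habs by lra.
    apply Rmult_le_reg_r with A; auto. }
  destruct (Req_dec (a + b) 0) as [E|E]; auto.
  assert (Hp : 0 < Rabs (a + b)) by (apply Rabs_pos_lt; auto).
  assert (H := Main (Rabs (a + b) / 8) ltac:(lra)). lra.
Qed.

Lemma gen_near (k : R -> C) (L : C) eps :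
  is_RInt_gen k (Rbar_locally m_infty) (Rbar_locally p_infty) L -> 0 < eps ->
  exists M, forall Rr, M <= Rr -> exists y, is_RInt k (- Rr) Rr y /\
     Rabs (fst y - fst L) < eps /\ Rabs (snd y - snd L) < eps.
Proof.
  intros H He.
  assert (Hl : locally L (ball L (mkposreal eps He))) by apply locally_ball.
  specialize (H _ Hl). destruct H as [Q Rr' [M1 HQ] [M2 HR] Hall].
  exists (Rmax (- M1 + 1) (M2 + 1)). intros Rr HRr.
  assert (A1 := Rmax_l (- M1 + 1) (M2 + 1)). assert (A2 := Rmax_r (- M1 + 1) (M2 + 1)).
  destruct (Hall (- Rr) Rr (HQ (- Rr) ltac:(lra)) (HR Rr ltac:(lra))) as [y [Hy [B1 B2]]].
  exists y. split; [exact Hy|]. split; apply ball_R; assumption.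
Qed.

Lemma fst_int (f : R -> C) (r : R -> R) a b y :
  is_RInt (fun x => (f x * RtoC (r x))%C) a b y ->
  RInt (fun x => fst (f x) * r x) a b = fst y.
Proof.
  intros H. apply (@is_RInt_fct_extend_fst R_NormedModule R_NormedModule) in H.
  apply (@is_RInt_unique R_CompleteNormedModule).
  eapply (@is_RInt_ext R_NormedModule); [|exact H]. intros x _. simpl. ring.
Qed.

Lemma snd_int (f : R -> C) (r : R -> R) a b y :
  is_RInt (fun x => (f x * RtoC (r x))%C) a b y ->
  RInt (fun x => snd (f x) * r x) a b = snd y.
Proof.
  intros H. apply (@is_RInt_fct_extend_snd R_NormedModule R_NormedModule) in H.
  apply (@is_RInt_unique R_CompleteNormedModule).
  eapply (@is_RInt_ext R_NormedModule); [|exact H]. intros x _. simpl. ring.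
Qed.

Lemma RInt_plus_R (f h : R -> R) a b : ex_RInt f a b -> ex_RInt h a b ->
  RInt (fun x => f x + h x) a b = RInt f a b + RInt h a b.
Proof. intros. apply (@RInt_plus R_CompleteNormedModule); auto. Qed.

Lemma Cmod_mult_RtoC (z : C) (r : R) : 0 <= r -> Cmod (z * RtoC r) = Cmod z * r.
Proof. intros Hr. rewrite Cmod_mult, Cmod_R, Rabs_right; auto. lra. Qed.

Lemma RInt_ext_R (f h : R -> R) a b : (forall x, f x = h x) -> RInt f a b = RInt h a b.
Proof. intros H. apply RInt_ext. intros; apply H. Qed.

Lemma im_le_Cmod (z : C) : Rabs (Im z) <= Cmod z.
Proof.
  unfold Cmod, Im. rewrite <- sqrt_Rsqr_abs. apply sqrt_le_1_alt.
  unfold Rsqr. simpl. generalize (pow2_ge_0 (fst z)). simpl. lra.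
Qed.

Section Part2.
Variables f g : R -> C.
Hypothesis Hf : SG f.
Hypothesis Hg : SG g.
Hypothesis Heq : forall phi : R -> C, Schwartz phi ->
  int_R (fun x => (f x * phi x)%C) = int_R (fun x => (g x * phi x)%C).

Lemma part2_HI x0 c : 1 <= c -> forall eta, 0 < eta -> forall Rlow, exists Rr, Rlow <= Rr /\
  Rabs (RInt (fun x => (fst (f x) - fst (g x)) * gauss c x0 x) (- Rr) Rr) < eta /\
  Rabs (RInt (fun x => (snd (f x) - snd (g x)) * gauss c x0 x) (- Rr) Rr) < eta.
Proof.
  intros Hc eta He Rlow.
  assert (Hs := gauss_schwartz c x0 ltac:(lra)).
  assert (I1 := prod_int f (gaussC c x0) Hf Hs).
  assert (I2 := prod_int g (gaussC c x0) Hg Hs).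
  rewrite Heq in I1 by auto.
  destruct (gen_near _ _ (eta / 2) I1 ltac:(lra)) as [M1 HM1].
  destruct (gen_near _ _ (eta / 2) I2 ltac:(lra)) as [M2 HM2].
  assert (HRr : exists Rr, Rr = Rmax Rlow (Rmax M1 M2)) by eauto. destruct HRr as [Rr HRr].
  assert (A1 := Rmax_l Rlow (Rmax M1 M2)). assert (A2 := Rmax_r Rlow (Rmax M1 M2)).
  assert (A3 := Rmax_l M1 M2). assert (A4 := Rmax_r M1 M2). rewrite <- HRr in A1, A2.
  destruct (HM1 Rr ltac:(lra)) as [y1 [Hy1 [B1 B2]]].
  destruct (HM2 Rr ltac:(lra)) as [y2 [Hy2 [B3 B4]]].
  destruct (SG_RGC f Hf) as [Rf1 Rf2]. destruct (SG_RGC g Hg) as [Rg1 Rg2].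
  exists Rr. split. lra. split.
  - assert (E : forall x, (fst (f x) - fst (g x)) * gauss c x0 x = fst (f x) * gauss c x0 x - fst (g x) * gauss c x0 x) by (intros; ring).
    rewrite (RInt_ext_R _ _ _ _ E).
    rewrite RInt_minus_R.
    2: apply RG_ex_RInt, RG_mult; auto; apply RG_gauss.
    2: apply RG_ex_RInt, RG_mult; auto; apply RG_gauss.
    rewrite (fst_int f (gauss c x0) _ _ y1 Hy1), (fst_int g (gauss c x0) _ _ y2 Hy2).
    replace (fst y1 - fst y2) with ((fst y1 - fst (int_R (fun x => (g x * gaussC c x0 x)%C)))
       - (fst y2 - fst (int_R (fun x => (g x * gaussC c x0 x)%C)))) by ring.
    eapply Rle_lt_trans. apply Rabs_triang. rewrite Rabs_Ropp. lra.
  - assert (E : forall x, (snd (f x) - snd (g x)) * gauss c x0 x = snd (f x) * gauss c x0 x - snd (g x) * gauss c x0 x) by (intros; ring).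
    rewrite (RInt_ext_R _ _ _ _ E).
    rewrite RInt_minus_R.
    2: apply RG_ex_RInt, RG_mult; auto; apply RG_gauss.
    2: apply RG_ex_RInt, RG_mult; auto; apply RG_gauss.
    rewrite (snd_int f (gauss c x0) _ _ y1 Hy1), (snd_int g (gauss c x0) _ _ y2 Hy2).
    replace (snd y1 - snd y2) with ((snd y1 - snd (int_R (fun x => (g x * gaussC c x0 x)%C)))
       - (snd y2 - snd (int_R (fun x => (g x * gaussC c x0 x)%C)))) by ring.
    eapply Rle_lt_trans. apply Rabs_triang. rewrite Rabs_Ropp. lra.
Qed.

Lemma part2_HB x0 : exists B, forall Rr, 0 <= Rr ->
  RInt (fun x => Rabs (fst (f x) - fst (g x)) * gauss 1 x0 x) (- Rr) Rr <= B /\ RInt (fun x => Rabs (snd (f x) - snd (g x)) * gauss 1 x0 x) (- Rr) Rr <= B.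
Proof.
  assert (Hs := gauss_schwartz 1 x0 ltac:(lra)).
  destruct (prod_bound f _ Hf Hs) as [Bf HBf].
  destruct (prod_bound g _ Hg Hs) as [Bg HBg].
  exists (Bf + Bg). intros Rr HRr.
  assert (RGf := SG_RGC f Hf). assert (RGg := SG_RGC g Hg).
  destruct RGf as [Rf1 Rf2]. destruct RGg as [Rg1 Rg2].
  assert (Hsum : forall Rr, 0 <= Rr ->
    RInt (fun x => Cmod (f x * gaussC 1 x0 x) + Cmod (g x * gaussC 1 x0 x)) (- Rr) Rr <= Bf + Bg).
  { intros r Hr. rewrite RInt_plus_R.
    - specialize (HBf r Hr). specialize (HBg r Hr). lra.
    - apply RG_ex_RInt, RGC_Cmod, RGC_mult. apply SG_RGC; auto. apply schwartz_cont; auto.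
    - apply RG_ex_RInt, RGC_Cmod, RGC_mult. apply SG_RGC; auto. apply schwartz_cont; auto. }
  assert (Hint2 : ex_RInt (fun x => Cmod (f x * gaussC 1 x0 x) + Cmod (g x * gaussC 1 x0 x)) (- Rr) Rr).
  { apply RG_ex_RInt, RG_plus; apply RGC_Cmod, RGC_mult; [apply SG_RGC; auto | apply schwartz_cont; auto | apply SG_RGC; auto | apply schwartz_cont; auto]. }
  assert (Hs2 := Hsum Rr HRr).
  split.
  - eapply Rle_trans; [|exact Hs2]. apply RInt_le. lra.
    + apply RG_ex_RInt, RG_mult. apply RG_comp. apply continuous_Rabs. apply RG_minus; auto. apply RG_gauss.
    + exact Hint2.
    + intros x _. unfold gaussC. rewrite !Cmod_mult_RtoC by (apply Rlt_le, gauss_pos).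
      assert (H1 := re_le_Cmod (f x)). assert (H2 := re_le_Cmod (g x)).
      assert (Hgp := gauss_pos 1 x0 x). unfold Re in H1, H2.
      assert (Rabs (fst (f x) - fst (g x)) <= Cmod (f x) + Cmod (g x)).
      { unfold Rminus. eapply Rle_trans. apply Rabs_triang. rewrite Rabs_Ropp. lra. }
      nra.
  - eapply Rle_trans; [|exact Hs2]. apply RInt_le. lra.
    + apply RG_ex_RInt, RG_mult. apply RG_comp. apply continuous_Rabs. apply RG_minus; auto. apply RG_gauss.
    + exact Hint2.
    + intros x _. unfold gaussC. rewrite !Cmod_mult_RtoC by (apply Rlt_le, gauss_pos).
      assert (H1 := im_le_Cmod (f x)). assert (H2 := im_le_Cmod (g x)).
      assert (Hgp := gauss_pos 1 x0 x). unfold Im in H1, H2.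
      assert (Rabs (snd (f x) - snd (g x)) <= Cmod (f x) + Cmod (g x)).
      { unfold Rminus. eapply Rle_trans. apply Rabs_triang. rewrite Rabs_Ropp. lra. }
      nra.
Qed.

Theorem part2_main x0 : f x0 = g x0.
Proof.
  destruct (part2_HB x0) as [B HB].
  assert (RGf := SG_RGC f Hf). assert (RGg := SG_RGC g Hg).
  destruct RGf as [Rf1 Rf2]. destruct RGg as [Rg1 Rg2].
  destruct Hf as [[_ HLf] _]. destruct Hg as [[_ HLg] _].
  destruct (HLf x0) as [lpf [lmf [[Hrf Hlf] Ef]]].
  destruct (HLg x0) as [lpg [lmg [[Hrg Hlg] Eg]]].
  apply Clim_iff in Hrf, Hlf, Hrg, Hlg.
  destruct Hrf as [Hrf1 Hrf2]. destruct Hlf as [Hlf1 Hlf2].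
  destruct Hrg as [Hrg1 Hrg2]. destruct Hlg as [Hlg1 Hlg2].
  assert (E1 : (fst lpf - fst lpg) + (fst lmf - fst lmg) = 0).
  { apply (approx_id (fun x => fst (f x) - fst (g x)) x0 _ _ B).
    - apply RG_minus; auto.
    - intros r Hr. apply (HB r Hr).
    - intros c Hc eta He Rl. destruct (part2_HI x0 c Hc eta He Rl) as [Rr [H1 [H2 _]]].
      exists Rr. auto.
    - apply lim_minus; auto.
    - apply lim_minus; auto. }
  assert (E2 : (snd lpf - snd lpg) + (snd lmf - snd lmg) = 0).
  { apply (approx_id (fun x => snd (f x) - snd (g x)) x0 _ _ B).
    - apply RG_minus; auto.
    - intros r Hr. apply (HB r Hr).
    - intros c Hc eta He Rl. destruct (part2_HI x0 c Hc eta He Rl) as [Rr [H1 [_ H2]]].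
      exists Rr. auto.
    - apply lim_minus; auto.
    - apply lim_minus; auto. }
  rewrite Ef, Eg.
  assert (E : (lpf + lmf)%C = (lpg + lmg)%C).
  { apply injective_projections; simpl; lra. }
  rewrite E. reflexivity.
Qed.
End Part2.


Theorem mainTheorem3 :
  (forall f phi : R -> C, SG f -> Schwartz phi ->
     piecewise_continuous (fun x => (f x * phi x)%C) /\
     abs_integrable (fun x => (f x * phi x)%C)) /\
  (forall f g : R -> C, SG f -> SG g ->
     (forall phi : R -> C, Schwartz phi ->
        int_R (fun x => (f x * phi x)%C) = int_R (fun x => (g x * phi x)%C)) ->
     forall x : R, f x = g x).
Proof.
  split.
  - exact part1.
  - intros f g Hf Hg Heq x. exact (part2_main f g Hf Hg Heq x).
Qed.
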